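(* Let $F$ be a field of characteristic $p>0$, $L$ a Lie algebra over $F$ and $A$ an associative enveloping algebra of $L$ (so $L\subseteq A^{(-)}$). Put $\tilde L=L\otimes_FE\subseteq\tilde A=A\otimes_FE$. If $a\in\tilde L$ is a sandwich of $\tilde L$, then $[a,b]^p=0$ in $\tilde A$ for every $b\in\tilde L$.
   Context: $A^{(-)}$ is $A$ with the commutator bracket $[x,y]=xy-yx$. $E$ is the commutative associative $F$-algebra without unit generated by $e_1,e_2,\dots$ with relations $e_i^2=0$; $\tilde A=A\otimes_FE$ and $\tilde L=L\otimes_FE$. An element $a$ of a Lie algebra $M$ is a sandwich if $\operatorname{ad}(a)^2=0$ and $\operatorname{ad}(a)\operatorname{ad}(c)\operatorname{ad}(a)=0$ for all $c\in M$, where $\operatorname{ad}(a):x\mapsto[x,a]$. *)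

(* Defs.v *)
From HB Require Import structures.
From mathcomp Require Import all_boot all_order all_algebra.
From mathcomp Require Import finmap.
Set Implicit Arguments. Unset Strict Implicit. Unset Printing Implicit Defensive.
Import Order.TTheory GRing.Theory.
Local Open Scope fset_scope.
Local Open Scope ring_scope.

(* E = commutative associative algebra without unit generated by e_1,e_2,...
   with e_i^2 = 0.  It has the F-basis e_S, S a nonempty finite set of
   indices, with e_S e_T = e_(S u T) if S, T are disjoint and 0 otherwise.
   Hence an element of A (x)_F E is uniquely  sum_S a_S (x) e_S  (finitely
   many nonzero a_S, S nonempty), which we represent as the coefficient
   function S |-> a_S.  *)

Definition tens (A : Type) := {fset nat} -> A.

Section Tensor.
Variables (F : fieldType) (A : algType F).

Definition in_tA (x : tens A) : Prop :=
  x fset0 = 0 /\ exists s : {fset {fset nat}}, forall S, S \notin s -> x S = 0.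

Definition in_tL (L : {pred A}) (x : tens A) : Prop :=
  in_tA x /\ forall S, x S \in L.

(* (sum a_S e_S)(sum b_T e_T) = sum_U (sum_{S u T = U, S,T disjoint} a_S b_T) e_U *)
Definition tmul (x y : tens A) : tens A := fun U =>
  \sum_(S <- fpowerset U | (S != fset0) && (S != U)) x S * y (U `\` S).

Definition tsub (x y : tens A) : tens A := fun U => x U - y U.

Definition tbr (x y : tens A) : tens A := tsub (tmul x y) (tmul y x).

(* texpS x n = x ^ (n+1) in the non-unital algebra A~ *)
Fixpoint texpS (x : tens A) (n : nat) : tens A :=
  match n with 0 => x | n'.+1 => tmul x (texpS x n') end.

Definition tis0 (x : tens A) : Prop := forall U, x U = 0.

(* a is a sandwich of the Lie algebra L~ = L (x) E (bracket = commutator),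
   with ad(a) : x |-> [x, a] :
   ad(a)^2 = 0 and ad(a) ad(c) ad(a) = 0 for all c in L~. *)
Definition tsandwich (L : {pred A}) (a : tens A) : Prop :=
  (forall x, in_tL L x -> tis0 (tbr (tbr x a) a)) /\
  (forall c x, in_tL L c -> in_tL L x -> tis0 (tbr (tbr (tbr x a) c) a)).

End Tensor.

Definition lie_subalg (F : fieldType) (A : algType F) (L : {pred A}) : Prop :=
  GRing.submod_closed L /\ forall x y, x \in L -> y \in L -> x * y - y * x \in L.

(* Main.v *)
Require Import Defs.
From HB Require Import structures.
From mathcomp Require Import all_boot all_order all_algebra.
From mathcomp Require Import finmap.
From mathcomp Require Import boolp.
Set Implicit Arguments. Unset Strict Implicit. Unset Printing Implicit Defensive.
Import Order.TTheory GRing.Theory.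
Local Open Scope fset_scope.
Local Open Scope ring_scope.

Definition Rt (A : Type) := {fset nat} -> A.
HB.instance Definition _ (A : Type) := gen_eqMixin (Rt A).
HB.instance Definition _ (A : Type) := gen_choiceMixin (Rt A).

Section Z.
Variable (A : zmodType).
Definition rzero : Rt A := fun _ => 0.
Definition ropp (x : Rt A) : Rt A := fun U => - x U.
Definition radd (x y : Rt A) : Rt A := fun U => x U + y U.
Lemma raddA : associative radd.
Proof. by move=> x y z; apply: funext => U; rewrite /radd addrA. Qed.
Lemma raddC : commutative radd.
Proof. by move=> x y; apply: funext => U; rewrite /radd addrC. Qed.
Lemma radd0 : left_id rzero radd.
Proof. by move=> x; apply: funext => U; rewrite /radd /rzero add0r. Qed.
Lemma raddN : left_inverse rzero ropp radd.
Proof. by move=> x; apply: funext => U; rewrite /radd /rzero /ropp addNr. Qed.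
End Z.
HB.instance Definition _ (A : zmodType) := GRing.isZmodule.Build (Rt A) (@raddA A) (@raddC A) (@radd0 A) (@raddN A).

Lemma addE (A : zmodType) (x y : Rt A) U : (x + y) U = x U + y U. Proof. by []. Qed.
Lemma oppE (A : zmodType) (x : Rt A) U : (- x) U = - x U. Proof. by []. Qed.
Lemma subE (A : zmodType) (x y : Rt A) U : (x - y) U = x U - y U. Proof. by []. Qed.
Lemma zeroE (A : zmodType) U : (0 : Rt A) U = 0. Proof. by []. Qed.
Lemma sumE (A : zmodType) (I : Type) (r : seq I) (P : pred I) (F : I -> Rt A) U :
  (\sum_(i <- r | P i) F i) U = \sum_(i <- r | P i) F i U.
Proof.
elim: r => [|i r IH]; first by rewrite !big_nil.
by rewrite !big_cons; case: (P i); rewrite ?addE IH.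
Qed.
Lemma mulrnE (A : zmodType) (x : Rt A) n U : (x *+ n) U = x U *+ n.
Proof. by elim: n => [|n IH]; rewrite ?mulr0n // !mulrS addE IH. Qed.

Ltac fset_solve :=
  (apply/fsetP => k || (apply/fsubsetP => k; apply/implyP));
  repeat match goal with H : is_true (_ `<=` _) |- _ => move/fsubsetP/(_ k)/implyP: H end;
  rewrite ?inE;
  repeat match goal with |- context [?x \in ?X] => case: (x \in X) end => //.

Lemma pick_sum (A : nmodType) (r : seq {fset nat}) (T : {fset nat}) (F : {fset nat} -> A) :
  uniq r -> T \in r -> (forall S, S \in r -> S != T -> F S = 0) ->
  \sum_(S <- r) F S = F T.
Proof.
move=> ur Tr H; rewrite (bigD1_seq T) //= big1_seq ?addr0 // => S /andP[]; eauto.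
Qed.

Lemma sub_pow (A : nmodType) (U S : {fset nat}) (g : {fset nat} -> A) : S `<=` U ->
  \sum_(R <- fpowerset S) g R = \sum_(R <- fpowerset U | R `<=` S) g R.
Proof.
move=> SU; rewrite -[RHS]big_filter; apply: perm_big; apply: uniq_perm.
- exact: fset_uniq.
- by rewrite filter_uniq // fset_uniq.
move=> R; rewrite mem_filter !fpowersetE; case RS: (R `<=` S) => //=.
by rewrite (fsubset_trans RS SU).
Qed.

Lemma pow_shift (A : nmodType) (U R : {fset nat}) (g : {fset nat} -> A) : R `<=` U ->
  \sum_(S <- fpowerset U | R `<=` S) g S = \sum_(Q <- fpowerset (U `\` R)) g (R `|` Q).
Proof.
move=> RU; rewrite -[LHS]big_filter -(big_map (fun Q => R `|` Q) xpredT g).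
apply: perm_big; apply: uniq_perm.
- by rewrite filter_uniq // fset_uniq.
- rewrite map_inj_in_uniq ?fset_uniq // => Q1 Q2.
  rewrite !fpowersetE => H1 H2 E.
  have -> : Q1 = (R `|` Q1) `\` R by fset_solve.
  rewrite E; fset_solve.
move=> S; rewrite mem_filter fpowersetE; apply/andP/mapP.
- case=> RS SU; exists (S `\` R); first by rewrite fpowersetE; fset_solve.
  fset_solve.
- case=> Q; rewrite fpowersetE => QU ->; split; fset_solve.
Qed.

Lemma pow_fubini (A : nmodType) (U : {fset nat}) (f : {fset nat} -> {fset nat} -> A) :
  \sum_(S <- fpowerset U) \sum_(R <- fpowerset S) f R S =
  \sum_(R <- fpowerset U) \sum_(Q <- fpowerset (U `\` R)) f R (R `|` Q).
Proof.
rewrite (@big_seq_cond _ _ _ _ (fpowerset U)).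
under eq_bigr => S /andP[SU _] do rewrite (@sub_pow _ U) -?fpowersetE //.
rewrite -big_seq_cond.
rewrite (exchange_big_dep xpredT) //=.
rewrite big_seq_cond [RHS]big_seq_cond; apply: eq_bigr => R /andP[RU _].
rewrite -pow_shift -?fpowersetE //; apply: eq_bigl => S; by rewrite andbC.
Qed.

Section Ring.
Variable (A : nzRingType).
Implicit Types x y z : Rt A.
Definition rmul x y : Rt A := fun U => \sum_(S <- fpowerset U) x S * y (U `\` S).
Definition rone : Rt A := fun U => if U == fset0 then 1 else 0.

Lemma rmulA : associative rmul.
Proof.
move=> x y z; apply: funext => U; rewrite /rmul /=.
under [LHS]eq_bigr => R _ do rewrite mulr_sumr.
under [RHS]eq_bigr => S _ do rewrite mulr_suml.
rewrite [RHS]pow_fubini big_seq [RHS]big_seq; apply: eq_bigr => R; rewrite fpowersetE => RU.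
rewrite big_seq [RHS]big_seq; apply: eq_bigr => Q; rewrite fpowersetE => QU.
rewrite mulrA; congr (_ * _ * z _); last by rewrite fsetDDl.
congr (y _); fset_solve.
Qed.

Lemma rmul1 : left_id rone rmul.
Proof.
move=> x; apply: funext => U; rewrite /rmul /rone (@pick_sum _ _ fset0).
- by rewrite eqxx mul1r fsetD0.
- exact: fset_uniq.
- by rewrite fpowersetE fsub0set.
by move=> S _ /negbTE ->; rewrite mul0r.
Qed.

Lemma rmulr1 : right_id rone rmul.
Proof.
move=> x; apply: funext => U; rewrite /rmul /rone (@pick_sum _ _ U).
- by rewrite fsetDv eqxx mulr1.
- exact: fset_uniq.
- by rewrite fpowersetE fsubset_refl.
move=> S; rewrite fpowersetE => SU SnU; rewrite fsetD_eq0.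
suff -> : (U `<=` S) = false by rewrite mulr0.
apply: negbTE; apply: contra SnU => US; rewrite eqEfsubset SU US.
done.
Qed.

Lemma rmulDl : left_distributive rmul +%R.
Proof.
move=> x y z; apply: funext => U; rewrite /rmul addE -big_split /=.
by apply: eq_bigr => S _; rewrite mulrDl.
Qed.

Lemma rmulDr : right_distributive rmul +%R.
Proof.
move=> x y z; apply: funext => U; rewrite /rmul addE -big_split /=.
by apply: eq_bigr => S _; rewrite mulrDr.
Qed.

Lemma rone_neq0 : rone != 0.
Proof.
apply/eqP => /(congr1 (fun f : Rt A => f fset0)); rewrite /rone eqxx.
by move/eqP; rewrite oner_eq0.
Qed.
End Ring.

HB.instance Definition _ (A : nzRingType) :=
  GRing.Zmodule_isNzRing.Build (Rt A) (@rmulA A) (@rmul1 A) (@rmulr1 A)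
    (@rmulDl A) (@rmulDr A) (@rone_neq0 A).


Section RingFacts.
Variable (A : nzRingType).
Implicit Types x y z : Rt A.
Lemma mulE x y U : (x * y) U = \sum_(S <- fpowerset U) x S * y (U `\` S).
Proof. by []. Qed.
Lemma oneE U : (1 : Rt A) U = if U == fset0 then 1 else 0.
Proof. by []. Qed.

Definition ee (T : {fset nat}) : Rt A := fun V => if V == T then 1 else 0.
Definition ss (a0 : A) : Rt A := fun V => if V == fset0 then a0 else 0.

Lemma mul_ee x T V : (x * ee T) V = if T `<=` V then x (V `\` T) else 0.
Proof.
rewrite mulE /ee; case: ifP => TV.
  rewrite (@pick_sum _ _ (V `\` T)) ?fset_uniq ?fpowersetE ?fsubDset ?fsubsetUr //.
    by rewrite fsetDK // eqxx mulr1.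
  move=> S; rewrite fpowersetE => SV SnT; case: eqP => [E|_]; last by rewrite mulr0.
  by move: SnT; rewrite -E fsetDK // eqxx.
rewrite big1_seq // => S /andP[_]; rewrite fpowersetE => SV.
case: eqP => [E|_]; last by rewrite mulr0.
by move: TV; rewrite -E fsubDset fsubsetUr.
Qed.

Lemma ee_mul x T V : (ee T * x) V = if T `<=` V then x (V `\` T) else 0.
Proof.
rewrite mulE /ee; case: ifP => TV.
  rewrite (@pick_sum _ _ T) ?fset_uniq ?fpowersetE ?eqxx ?mul1r //.
  by move=> S _ /negbTE ->; rewrite mul0r.
rewrite big1_seq // => S /andP[_]; rewrite fpowersetE => SV.
case: eqP => [E|_]; last by rewrite mul0r.
by move: TV; rewrite -E SV.
Qed.

Lemma ee_comm x T : x * ee T = ee T * x.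
Proof. by apply: funext => V; rewrite mul_ee ee_mul. Qed.

Lemma ee_sq T : T != fset0 -> ee T * ee T = 0.
Proof.
move=> Tn0; apply: funext => V; rewrite mul_ee /ee zeroE.
case: ifP => // TV; case: eqP => // E; exfalso.
case/fset0Pn: Tn0 => k kT; have := kT; rewrite -{1}E !inE kT.
done.
Qed.

Lemma ss_mul a0 x V : (ss a0 * x) V = a0 * x V.
Proof.
rewrite mulE /ss (@pick_sum _ _ fset0) ?fset_uniq ?fpowersetE ?fsub0set ?eqxx ?fsetD0 //.
by move=> S _ /negbTE ->; rewrite mul0r.
Qed.

Lemma mul_ss a0 x V : (x * ss a0) V = x V * a0.
Proof.
rewrite mulE /ss (@pick_sum _ _ V) ?fset_uniq ?fpowersetE ?fsubset_refl ?fsetDv ?eqxx //.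
move=> S; rewrite fpowersetE => SV SnV; rewrite fsetD_eq0.
suff -> : (V `<=` S) = false by rewrite mulr0.
by apply: negbTE; apply: contra SnV => VS; rewrite eqEfsubset SV VS.
Qed.

Definition lives (N : {fset nat}) x := forall V, ~~ (V `<=` N) -> x V = 0.

Lemma lives_add N x y : lives N x -> lives N y -> lives N (x + y).
Proof. by move=> hx hy V hV; rewrite addE hx ?hy ?addr0. Qed.
Lemma lives_opp N x : lives N x -> lives N (- x).
Proof. by move=> hx V hV; rewrite oppE hx ?oppr0. Qed.
Lemma lives_sub N x y : lives N x -> lives N y -> lives N (x - y).
Proof. by move=> hx hy; apply: lives_add => //; apply: lives_opp. Qed.
Lemma lives_mul N x y : lives N x -> lives N y -> lives N (x * y).
Proof.
move=> hx hy V hV; rewrite mulE big1_seq // => S /andP[_]; rewrite fpowersetE => SV.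
case SN: (S `<=` N); last by rewrite hx ?SN ?mul0r.
rewrite hy ?mulr0 //; apply: contra hV => H.
by apply/fsubsetP => k kV; case: (boolP (k \in S)) => kS;
  [apply: (fsubsetP SN) | apply: (fsubsetP H)]; rewrite ?inE ?kS.
Qed.
Lemma lives_ss N a0 : lives N (ss a0).
Proof. by move=> V hV; rewrite /ss; case: eqP => // E; move: hV; rewrite E fsub0set. Qed.
Lemma lives_ee N T : T `<=` N -> lives N (ee T).
Proof. by move=> TN V hV; rewrite /ee; case: eqP => // E; move: hV; rewrite E TN. Qed.
Lemma lives_sup N M x : N `<=` M -> lives N x -> lives M x.
Proof. by move=> NM hx V hV; apply: hx; apply: contra hV => H; apply: fsubset_trans NM. Qed.

Lemma ee_cancel N x i : lives N x -> i \notin N -> x * ee [fset i] = 0 -> x = 0.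
Proof.
move=> hx iN E; apply: funext => V; rewrite zeroE.
case VN: (V `<=` N); last by rewrite hx ?VN.
have := congr1 (fun f : Rt A => f (V `|` [fset i])) E.
rewrite mul_ee zeroE fsubsetUr.
have -> : (V `|` [fset i]) `\` [fset i] = V; last by [].
apply/fsetP => k; rewrite !inE; case: eqP => [->|] /=; last by rewrite orbF.
by apply/esym/negbTE; apply: contra iN => iV; apply: (fsubsetP VN).
Qed.
End RingFacts.
Arguments ee {A} T _. 
Arguments ss {A} a0 _.

Lemma key_comm (R : nzRingType) (a d b' : R) : d * a = a * d ->
  (d * b' - b' * d) * a - a * (d * b' - b' * d) = 0 ->
  (a * b' - b' * a) * d = d * (a * b' - b' * a).
Proof.
move=> hda H; apply/eqP; rewrite -subr_eq0; apply/eqP; rewrite -[RHS]H.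
rewrite !mulrBl !mulrBr !mulrA hda -!mulrA hda !mulrA.
rewrite !opprB addrACA [RHS]addrACA; congr (_ + _); exact: addrC.
Qed.

Lemma frob_sum (R : nzRingType) (p : nat) (I : Type) (r : seq I) (v : I -> R) :
  p \in [pchar R] -> (forall i j, GRing.comm (v i) (v j)) -> (forall i, v i ^+ p = 0) ->
  (\sum_(i <- r) v i) ^+ p = 0.
Proof.
move=> hp hc hv; elim: r => [|i r IH].
  by rewrite big_nil expr0n; case: p hp hv => // /andP[].
rewrite big_cons -(pFrobenius_autE hp) pFrobenius_autD_comm; last first.
  by apply: commr_sum => j _; apply: hc.
by rewrite !pFrobenius_autE IH hv addr0.
Qed.

Section Bridge.
Variables (F : fieldType) (A : algType F).
Implicit Types x y : tens A.

Lemma tmul0 x y : tmul x y fset0 = 0.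
Proof.
rewrite /tmul big1_seq // => S /andP[/andP[S0 _]]; rewrite fpowersetE fsubset0.
by rewrite (negbTE S0).
Qed.

Lemma tmulE x y : x fset0 = 0 -> y fset0 = 0 -> tmul x y = ((x : Rt A) * (y : Rt A) : Rt A).
Proof.
move=> hx hy; apply: funext => U; rewrite mulE /tmul big_mkcond /=.
apply: eq_bigr => S _; case: ifP => // /negbT; rewrite negb_and !negbK.
case/orP => /eqP ->; first by rewrite hx mul0r.
by rewrite fsetDv hy mulr0.
Qed.

Lemma tbr0 x y : tbr x y fset0 = 0.
Proof. by rewrite /tbr /tsub !tmul0 subr0. Qed.

Lemma tbrE x y : x fset0 = 0 -> y fset0 = 0 ->
  tbr x y = ((x : Rt A) * (y : Rt A) - (y : Rt A) * (x : Rt A) : Rt A).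
Proof. by move=> hx hy; rewrite /tbr /tsub !tmulE. Qed.

Lemma texpSE x n : x fset0 = 0 -> texpS x n = ((x : Rt A) ^+ n.+1 : Rt A).
Proof.
move=> hx; elim: n => [|n IH]; first by [].
have h0 : texpS x n fset0 = 0 by case: n {IH} => //= n; rewrite tmul0.
by rewrite [LHS]/= tmulE // IH [RHS]exprS.
Qed.
End Bridge.

Section More.
Variable (A : nzRingType).
Implicit Types x y : Rt A.
Lemma br_ee x y T : (x * ee T) * y - y * (x * ee T) = (x * y - y * x) * ee T.
Proof. by rewrite -mulrA -(ee_comm y) !mulrA mulrBl. Qed.
Lemma br_ee2 x y T : y * (x * ee T) - (x * ee T) * y = (y * x - x * y) * ee T.
Proof. by rewrite -opprB br_ee -mulNr opprB. Qed.
Lemma comm_ee x y T T' : GRing.comm x y -> GRing.comm (x * ee T) (y * ee T').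
Proof.
move=> hxy; rewrite /GRing.comm.
have E : forall x y T T', (x * ee T) * (y * ee T') = (x * y) * (ee T * ee T').
  move=> x0 y0 T0 T1; by rewrite -mulrA -(ee_comm (y0 * ee T1)) !mulrA -mulrA (ee_comm (ee T1)) mulrA.
by rewrite !E hxy (ee_comm (ee T)).
Qed.
Lemma fresh (N : {fset nat}) : exists i, i \notin N.
Proof.
exists (\max_(k <- N) k).+1; apply/negP => H.
have := @leq_bigmax_seq _ (enum_fset N) xpredT id _ H isT; by rewrite ltnn.
Qed.
End More.

Theorem lemma22 (F : fieldType) (p : nat) (hp : (p \in [pchar F])%R)
  (A : algType F) (L : {pred A}) (hL : lie_subalg L)
  (a : tens A) (ha : in_tL L a) (hsw : tsandwich L a)
  (b : tens A) (hb : in_tL L b) :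
  tis0 (texpS (tbr a b) p.-1).
Proof.
case: ha => [[a0 [sa hsa]] aL]; case: hb => [[b0 [sb hsb]] bL].
have L0 : 0 \in L by case: hL => [[]].
pose N := \bigcup_(S <- sa) S.
have livA : lives N (a : Rt A).
  move=> V hV; apply: hsa; apply: contra hV => Vs.
  exact: (@bigfcup_sup _ _ _ V xpredT id).
have [j jN] := fresh N.
have [i iN] := fresh (N `|` [fset j]).
have iN' : i \notin N by apply: contra iN => H; rewrite inE H.
pose s T : Rt A := ss (b T).
have memx : forall T k, in_tL L ((s T * ee [fset k] : Rt A) : tens A).
  move=> T k; split; [split|].
  - rewrite ss_mul /ee; case: eqP; last by rewrite mulr0.
    by move/fsetP/(_ k); rewrite !inE eqxx.
  - exists [fset [fset k]] => S; rewrite inE ss_mul /ee => /negbTE ->.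
    by rewrite mulr0.
  - move=> S; rewrite ss_mul /ee; case: eqP => _; first by rewrite mulr1.
    by rewrite mulr0.
have x0 : forall T k, (s T * ee [fset k] : Rt A) fset0 = 0 by move=> T k; case: (memx T k) => [[]].
pose u T : Rt A := s T * (a : Rt A) - (a : Rt A) * s T.
have livu : forall T, lives N (u T).
  by move=> T; apply: lives_sub; apply: lives_mul => //; apply: lives_ss.
have h1 : forall T, u T * (a : Rt A) = (a : Rt A) * u T.
  move=> T; have := hsw.1 _ (memx T i).
  rewrite /tis0 (tbrE (tbr0 _ _) a0) (tbrE (x0 T i) a0) br_ee br_ee => H.
  have /(ee_cancel _ iN') : (u T * (a : Rt A) - (a : Rt A) * u T) * ee [fset i] = 0 by apply: funext.
  by move=> /(_ (lives_sub (lives_mul (livu T) livA) (lives_mul livA (livu T)))) /eqP; rewrite subr_eq0 => /eqP.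
have h2 : forall T T', (u T * s T' - s T' * u T) * (a : Rt A) - (a : Rt A) * (u T * s T' - s T' * u T) = 0.
  move=> T T'; have := hsw.2 _ _ (memx T' j) (memx T i).
  rewrite /tis0 (tbrE (tbr0 _ _) a0) (tbrE (tbr0 _ _) (x0 T' j)) (tbrE (x0 T i) a0).
  rewrite br_ee br_ee br_ee2 br_ee br_ee => H.
  have livs : lives N (s T') by apply: lives_ss.
  have livZ := lives_sub (lives_mul (lives_sub (lives_mul (livu T) livs) (lives_mul livs (livu T))) livA)
     (lives_mul livA (lives_sub (lives_mul (livu T) livs) (lives_mul livs (livu T)))).
  apply: (ee_cancel livZ jN); apply: (ee_cancel _ iN); last by apply: funext.
  apply: lives_mul; first exact: (lives_sup (fsubsetUl _ _) livZ).
  by apply: lives_ee; apply: fsubsetUr.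
pose w T : Rt A := (a : Rt A) * s T - s T * (a : Rt A).
have wu : forall T, w T = - u T by move=> T; rewrite /w /u opprB.
have hcomm : forall T T', GRing.comm (w T * ee T) (w T' * ee T').
  move=> T T'; apply: comm_ee; rewrite /GRing.comm.
  have K := @key_comm _ _ _ _ (h1 T') (h2 T' T).
  by rewrite (wu T') mulrN mulNr K.
have bE : (b : Rt A) = \sum_(T <- sb) s T * ee T.
  apply: funext => V; rewrite sumE.
  under eq_bigr => T _ do rewrite ss_mul.
  case: (boolP (V \in sb)) => Vs.
  - rewrite (@pick_sum _ _ V) ?fset_uniq // /ee ?eqxx ?mulr1 //.
    by move=> S _ /negbTE SV; rewrite eq_sym SV mulr0.
  - rewrite big1_seq ?hsb // => T /andP[_ Ts]; rewrite /ee; case: eqP => [E|]; last by rewrite mulr0.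
    by move: Vs; rewrite E Ts.
have cE : (tbr a b : Rt A) = \sum_(T <- sb) w T * ee T.
  rewrite tbrE // bE mulr_sumr mulr_suml -sumrB; apply: eq_bigr => T _; exact: br_ee2.
have hpR : p \in [pchar (Rt A)].
  apply/andP; split; first exact: pcharf_prime hp.
  apply/eqP/funext => V; rewrite mulrnE oneE zeroE; case: ifP => _; last by rewrite mul0rn.
  by rewrite -scaler_nat (pcharf0 hp) scale0r.
have p2 : (1 < p)%N := prime_gt1 (pcharf_prime hp).
have hv : forall T, (w T * ee T) ^+ p = 0.
  move=> T; case: (eqVneq T fset0) => [->|Tn0].
  - have -> : w fset0 = 0.
      rewrite /w; have -> : s fset0 = 0 by apply: funext => V; rewrite /s /ss b0; case: ifP.
      by rewrite mulr0 mul0r subr0.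
    by rewrite mul0r expr0n; case: p p2 {hp hpR}.
  - rewrite exprMn_comm; last exact: ee_comm.
    have -> : p = (p.-2).+2 by case: p p2 {hp hpR} => [|[|n]].
    by rewrite [ee T ^+ _]exprS [ee T ^+ _]exprS (mulrA (ee T)) ee_sq // mul0r mulr0.
move=> U; rewrite texpSE ?tbr0 // prednK ?prime_gt0 ?(pcharf_prime hp) //.
by rewrite cE (@frob_sum _ _ _ _ _ hpR hcomm hv).
Qed.
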